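(* Let $f_{SG}(x)=\sqrt{\frac{x^2+1}{2}}-\sqrt x$ for $x\in(0,\infty)$, let $f_{SG}^*(u)=u\,f_{SG}\!\left(\frac{1-u}{u}\right)$ for $u\in(0,1)$, extended by continuity to $[0,1]$ (explicitly $f_{SG}^*(u)=\frac{\sqrt2}{2}\sqrt{u^2+(1-u)^2}-\sqrt{u(1-u)}$), and define $\overline M_{SG}(C_1,C_2)=E_X\{f_{SG}^*(P(C_2\mid x))\}$. Then $$P_e\le \frac12\left[1-\frac{2}{\sqrt2}\,\overline M_{SG}(C_1,C_2)\right].$$
   Context: Two-class decision problem: classes $C_1,C_2$, an observation $x$ in a space $\mathrm X$ with density $p(x)$, and a posteriori probabilities $P(C_1\mid x),P(C_2\mid x)\ge0$ with $P(C_1\mid x)+P(C_2\mid x)=1$. $E_X\{g(x)\}=\int_{\mathrm X} g(x)p(x)\,dx$. $P_e=E_X\{\min(P(C_1\mid x),P(C_2\mid x))\}$ is the Bayesian probability of error. *)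

(* Defs.v *)
From HB Require Import structures.
From mathcomp Require Import all_boot all_order all_algebra.
From mathcomp Require Import all_classical all_reals all_analysis.
Set Implicit Arguments. Unset Strict Implicit. Unset Printing Implicit Defensive.
Import Order.TTheory GRing.Theory Num.Theory.
Local Open Scope ring_scope.

Definition fSG {R : realType} (x : R) : R :=
  Num.sqrt ((x ^+ 2 + 1) / 2) - Num.sqrt x.

(* f*_SG(u) = u f_SG((1-u)/u) on (0,1), extended by continuity to [0,1]
   using the explicit closed form at the endpoints (and, irrelevantly,
   outside [0,1]). *)
Definition fSGstar {R : realType} (u : R) : R :=
  if (0 < u) && (u < 1) then u * fSG ((1 - u) / u)
  else Num.sqrt 2 / 2 * Num.sqrt (u ^+ 2 + (1 - u) ^+ 2)
       - Num.sqrt (u * (1 - u)).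

(* E_X{g} = \int_X g(x) p(x) dmu(x), p a density w.r.t. reference measure mu *)
Definition EX {d} {T : measurableType d} {R : realType}
  (mu : {measure set T -> \bar R}) (p : T -> R) (g : T -> R) : R :=
  Rintegral mu setT (fun x => g x * p x).

Definition Pe {d} {T : measurableType d} {R : realType}
  (mu : {measure set T -> \bar R}) (p P1 P2 : T -> R) : R :=
  EX mu p (fun x => Order.min (P1 x) (P2 x)).

Definition MSG {d} {T : measurableType d} {R : realType}
  (mu : {measure set T -> \bar R}) (p P2 : T -> R) : R :=
  EX mu p (fun x => fSGstar (P2 x)).

(* Main.v *)
Require Import Defs.
From HB Require Import structures.
From mathcomp Require Import all_boot all_order all_algebra.
From mathcomp Require Import all_classical all_reals all_analysis.
From mathcomp Require Import ring lra measurable_realfun.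
Import Order.TTheory GRing.Theory Num.Theory.
Local Open Scope ring_scope.

Definition gcl {R : realType} (u : R) : R :=
  Num.sqrt 2 / 2 * Num.sqrt (u ^+ 2 + (1 - u) ^+ 2) - Num.sqrt (u * (1 - u)).

Lemma sqrt_half {R : realType} (s : R) : 0 <= s ->
  Num.sqrt 2 / 2 * Num.sqrt s = Num.sqrt (s / 2).
Proof.
move=> s0.
have h : s / 2 = s * (Num.sqrt 2 / 2) ^+ 2.
  by rewrite expr_div_n sqr_sqrtr // ; field.
rewrite h sqrtrM // sqrtr_sqr ger0_norm; first by rewrite mulrC.
by apply: divr_ge0 => //; exact: sqrtr_ge0.
Qed.

Lemma fSGstarE {R : realType} (u : R) : fSGstar u = gcl u.
Proof.
rewrite /fSGstar /gcl /fSG; case: ifP => // /andP[u0 u1].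
have uu : 0 <= u by exact: ltW.
rewrite mulrBr.
have e1 : forall X : R, 0 <= X -> u * Num.sqrt X = Num.sqrt (u ^+ 2 * X).
  by move=> X X0; rewrite sqrtrM ?sqr_ge0 // sqrtr_sqr ger0_norm.
have un : u != 0 by rewrite gt_eqF.
rewrite !e1; last 2 first.
- by apply: divr_ge0; lra.
- apply: divr_ge0 => //; apply: addr_ge0 => //; exact: sqr_ge0.
rewrite sqrt_half; last by apply: addr_ge0; exact: sqr_ge0.
congr (Num.sqrt _ - Num.sqrt _); field => //.
Qed.

Lemma sq_step {R : realType} (r a b u m : R) : 0 < r -> 0 <= a -> 0 <= b -> 0 <= m ->
  r ^+ 2 = 2 -> a ^+ 2 = u ^+ 2 + (1 - u) ^+ 2 -> b ^+ 2 = u * (1 - u) ->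
  (m = 2^-1 - u \/ m = 2^-1 - (1 - u)) ->
  r * a / 2 <= r * m + b.
Proof.
move=> r0 a0 b0 m0 r2 a2 b2 hm.
have E : (r * m + b) ^+ 2 - (r * a / 2) ^+ 2
   = r ^+ 2 * m ^+ 2 + 2 * (r * m * b) + b ^+ 2 - r ^+ 2 * a ^+ 2 / 4 by field.
rewrite r2 a2 b2 in E.
have E2 : (r * m + b) ^+ 2 - (r * a / 2) ^+ 2 = 2 * (r * m * b).
  by rewrite E; case: hm => ->; field.
have : 0 <= (r * m + b) ^+ 2 - (r * a / 2) ^+ 2.
  by rewrite E2; apply: mulr_ge0 => //; apply: mulr_ge0 => //; apply: mulr_ge0 => //; exact: ltW.
rewrite subr_ge0 ler_sqr ?nnegrE //.
- by apply: divr_ge0 => //; apply: mulr_ge0 => //; exact: ltW.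
- by apply: addr_ge0 => //; apply: mulr_ge0 => //; exact: ltW.
Qed.

Lemma pointwise {R : realType} (u : R) : 0 <= u <= 1 ->
  Order.min (1 - u) u + 2^-1 * (2 / Num.sqrt 2) * gcl u <= 2^-1.
Proof.
move=> /andP[u0 u1].
set r := Num.sqrt 2.
have r0 : 0 < r by rewrite sqrtr_gt0.
have r2 : r ^+ 2 = 2 by rewrite sqr_sqrtr.
set a := Num.sqrt (u ^+ 2 + (1 - u) ^+ 2).
set b := Num.sqrt (u * (1 - u)).
have a0 : 0 <= a by exact: sqrtr_ge0.
have b0 : 0 <= b by exact: sqrtr_ge0.
have a2 : a ^+ 2 = u ^+ 2 + (1 - u) ^+ 2 by rewrite sqr_sqrtr // addr_ge0 // sqr_ge0.
have b2 : b ^+ 2 = u * (1 - u) by rewrite sqr_sqrtr // mulr_ge0 //; lra.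
rewrite /gcl -/r -/a -/b.
have -> : 2^-1 * (2 / r) * (r / 2 * a - b) = (r * a / 2 - b) / r.
  by field; rewrite gt_eqF.
have [m [hm hmin]] : exists m, (m = 2^-1 - u \/ m = 2^-1 - (1 - u)) /\
    0 <= m /\ Order.min (1 - u) u = 2^-1 - m.
  case: (leP u (1 - u)) => h.
  - exists (2^-1 - u); split; first by left.
    split; first lra.
    rewrite /Order.min; case: (ltP (1 - u) u) => h'; lra.
  - exists (2^-1 - (1 - u)); split; first by right.
    split; first lra.
    rewrite /Order.min; case: (ltP (1 - u) u) => h'; lra.
case: hmin => m0 hminE; rewrite hminE.
have H := @sq_step _ r a b u m r0 a0 b0 m0 r2 a2 b2 hm.
have : (r * a / 2 - b) / r <= m by rewrite ler_pdivrMr //; lra.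
lra.
Qed.

Lemma int_bdd {d} {T : measurableType d} {R : realType}
  (mu : {measure set T -> \bar R}) (p h : T -> R) (C : R) :
  mu.-integrable setT (fun x => (p x)%:E) ->
  measurable_fun setT h -> (forall x, `|h x| <= C) ->
  mu.-integrable setT (EFin \o (fun x => h x * p x)).
Proof.
move=> pi mh hC.
have hb : [bounded h x | x in setT].
  exists C; split; first exact: num_real.
  move=> M CM y _ /=; exact: (le_trans (hC y) (ltW CM)).
have := integrableMl measurableT pi mh hb.
congr (mu.-integrable _ _); apply/funext => x /=.
by rewrite mulrC.
Qed.

Lemma gcl_bdd {R : realType} (u : R) : 0 <= u <= 1 -> `|gcl u| <= 1 + Num.sqrt 2.
Proof.
move=> /andP[u0 u1].
have t0 : 0 <= u * (1 - u) by apply: mulr_ge0; lra.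
have t1 : u * (1 - u) <= 1 by apply: mulr_ile1; lra.
have s1 : u ^+ 2 + (1 - u) ^+ 2 <= 1.
  have -> : u ^+ 2 + (1 - u) ^+ 2 = 1 - 2 * (u * (1 - u)) by ring.
  lra.
have a1 : Num.sqrt (u ^+ 2 + (1 - u) ^+ 2) <= 1 by rewrite -[X in _ <= X]sqrtr1 ler_sqrt.
have b1 : Num.sqrt (u * (1 - u)) <= 1 by rewrite -[X in _ <= X]sqrtr1 ler_sqrt.
have a0 := sqrtr_ge0 (u ^+ 2 + (1 - u) ^+ 2).
have b0 := sqrtr_ge0 (u * (1 - u)).
have r0 := sqrtr_ge0 (2 : R).
rewrite /gcl; apply: (le_trans (ler_normB _ _)).
have c0 : 0 <= Num.sqrt 2 / 2 * Num.sqrt (u ^+ 2 + (1 - u) ^+ 2).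
  by apply: mulr_ge0 => //; apply: divr_ge0.
rewrite (ger0_norm c0) (ger0_norm b0).
have : Num.sqrt 2 / 2 * Num.sqrt (u ^+ 2 + (1 - u) ^+ 2) <= Num.sqrt 2 / 2 * 1.
  by apply: ler_wpM2l => //; apply: divr_ge0.
lra.
Qed.

Theorem mainTheorem5 (d : measure_display) (T : measurableType d) (R : realType)
  (mu : {measure set T -> \bar R}) (p P1 P2 : T -> R)
  (p_meas : measurable_fun setT p)
  (p_ge0 : forall x, 0 <= p x)
  (p_int : mu.-integrable setT (fun x => (p x)%:E))
  (p_norm : Rintegral mu setT p = 1)
  (P1_meas : measurable_fun setT P1) (P2_meas : measurable_fun setT P2)
  (P1_ge0 : forall x, 0 <= P1 x) (P2_ge0 : forall x, 0 <= P2 x)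
  (P_sum : forall x, P1 x + P2 x = 1) :
  Pe mu p P1 P2 <= 2^-1 * (1 - 2 / Num.sqrt 2 * MSG mu p P2).
Proof.
have P2le1 : forall x, P2 x <= 1 by move=> x; have := P_sum x; have := P1_ge0 x; lra.
have P1E : forall x, P1 x = 1 - P2 x by move=> x; have := P_sum x; lra.
pose k : R := 2^-1 * (2 / Num.sqrt 2).
have msqrt : measurable_fun setT (@Num.sqrt R) := continuous_measurable_fun (@sqrt_continuous R).
have mg : measurable_fun setT (fun x => gcl (P2 x)).
  rewrite /gcl; apply: measurable_funB.
    apply: measurable_funM; first exact: measurable_cst.
    apply: (measurableT_comp msqrt); apply: measurable_funD.
      exact: measurable_funX.
    by apply: measurable_funX; apply: measurable_funB => //; exact: measurable_cst.
  apply: (measurableT_comp msqrt); apply: measurable_funM => //.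
  by apply: measurable_funB => //; exact: measurable_cst.
have mmin : measurable_fun setT (fun x => Order.min (P1 x) (P2 x)).
  exact: measurable_minr.
have gb : forall x, `|gcl (P2 x)| <= 1 + Num.sqrt 2.
  by move=> x; apply: gcl_bdd; rewrite P2_ge0 P2le1.
have minb : forall x, `|Order.min (P1 x) (P2 x)| <= 1.
  move=> x; rewrite ger0_norm.
    by rewrite ge_min P2le1 orbT.
  by rewrite le_min P1_ge0 P2_ge0.
have i1 := int_bdd mu _ _ _ p_int mmin minb.
have i2 := int_bdd mu _ _ _ p_int mg gb.
have mkg : measurable_fun setT (fun x => k * gcl (P2 x)).
  by apply: measurable_funM => //; exact: measurable_cst.
have kgb : forall x, `|k * gcl (P2 x)| <= `|k| * (1 + Num.sqrt 2).
  by move=> x; rewrite normrM; apply: ler_wpM2l => //.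
have i2k : mu.-integrable setT (EFin \o (fun x => k * (gcl (P2 x) * p x))).
  have := int_bdd mu _ _ _ p_int mkg kgb.
  congr (mu.-integrable _ _); apply/funext => x /=; by rewrite mulrA.
have MSGE : MSG mu p P2 = Rintegral mu setT (fun x => gcl (P2 x) * p x).
  by apply: eq_Rintegral => x _; rewrite fSGstarE.
rewrite /Pe /EX MSGE.
suff H : Rintegral mu setT (fun x => Order.min (P1 x) (P2 x) * p x)
    + k * Rintegral mu setT (fun x => gcl (P2 x) * p x) <= 2^-1.
  have -> : 2^-1 * (1 - 2 / Num.sqrt 2 * Rintegral mu setT (fun x => gcl (P2 x) * p x)) =
    2^-1 - k * Rintegral mu setT (fun x => gcl (P2 x) * p x) by rewrite /k; ring.
  lra.
rewrite -RintegralZl // -RintegralD //.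
have -> : 2^-1 = Rintegral mu setT (fun x => 2^-1 * p x) :> R.
  by rewrite RintegralZl // p_norm mulr1.
apply: le_Rintegral => //.
- have mh : measurable_fun setT (fun x => Order.min (P1 x) (P2 x) + k * gcl (P2 x)).
    exact: measurable_funD.
  have hb : forall x, `|Order.min (P1 x) (P2 x) + k * gcl (P2 x)| <= 1 + `|k| * (1 + Num.sqrt 2).
    by move=> x; apply: (le_trans (ler_normD _ _)); apply: lerD.
  have := int_bdd mu _ _ _ p_int mh hb.
  congr (mu.-integrable _ _); apply/funext => x /=; by rewrite mulrDl mulrA.
- have mh : measurable_fun setT (fun _ : T => (2^-1 : R)) by exact: measurable_cst.
  have hb : forall x : T, `|(2^-1 : R)| <= 1.
    by move=> _; rewrite ger0_norm; lra.
  exact: (int_bdd mu _ _ _ p_int mh hb).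
move=> x _.
rewrite mulrA -mulrDl ler_wpM2r //.
rewrite P1E; apply: (@pointwise _ (P2 x)).
by rewrite P2_ge0 P2le1.
Qed.
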